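(* Let $R$ be a commutative ring. An object $(M_t,M_h;\mu_a,\mu_b)$ of $\mathrm{Rep}_R(\varkappa)$ lies in ${}^{\perp}\mathrm{Rel}_R(\varkappa)$ if and only if $M_h=0$.
   Context: $\mathrm{Rep}_R(\varkappa)$: objects $(M_t,M_h;\mu_a,\mu_b)$ with $\mu_a,\mu_b\in\mathrm{Hom}_R(M_t,M_h)$, morphisms pairs of $R$-linear maps commuting with the $\mu$'s. $\mathrm{Rel}_R(\varkappa)$: full subcategory of objects with $\ker(\mu_a)\cap\ker(\mu_b)=0$. ${}^{\perp}\mathrm{Rel}_R(\varkappa)$ is the full subcategory of objects $T$ with $\mathrm{Hom}(T,F)=0$ for every $F\in\mathrm{Rel}_R(\varkappa)$. *)

(* Defs.v *)
From HB Require Import structures.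
From mathcomp Require Import all_boot all_algebra.
Set Implicit Arguments. Unset Strict Implicit. Unset Printing Implicit Defensive.
Import GRing.Theory.
Local Open Scope ring_scope.

Record kron_rep (R : comPzRingType) := KronRep {
  Mt : lmodType R;
  Mh : lmodType R;
  mu_a : {linear Mt -> Mh};
  mu_b : {linear Mt -> Mh}
}.

Definition is_kron_morph (R : comPzRingType) (T F : kron_rep R)
  (ft : {linear Mt T -> Mt F}) (fh : {linear Mh T -> Mh F}) : Prop :=
  (forall x, fh (mu_a T x) = mu_a F (ft x)) /\
  (forall x, fh (mu_b T x) = mu_b F (ft x)).

Definition kron_hom_zero (R : comPzRingType) (T F : kron_rep R) : Prop :=
  forall (ft : {linear Mt T -> Mt F}) (fh : {linear Mh T -> Mh F}),
    is_kron_morph ft fh -> (forall x, ft x = 0) /\ (forall y, fh y = 0).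

Definition in_Rel (R : comPzRingType) (F : kron_rep R) : Prop :=
  forall x : Mt F, mu_a F x = 0 -> mu_b F x = 0 -> x = 0.

Definition in_perp_Rel (R : comPzRingType) (T : kron_rep R) : Prop :=
  forall F : kron_rep R, in_Rel F -> kron_hom_zero T F.

(* Main.v *)
Require Import Defs.
From HB Require Import structures.
From mathcomp Require Import all_boot all_algebra.
Local Open Scope ring_scope.
Import GRing.Theory.
Set Implicit Arguments. Unset Strict Implicit.

Definition pfst (R : comPzRingType) (V : lmodType R) : (V * V)%type -> V := fun p => p.1.
Definition psnd (R : comPzRingType) (V : lmodType R) : (V * V)%type -> V := fun p => p.2.
Definition pidf (R : comPzRingType) (V : lmodType R) : V -> V := fun p => p.
Definition ppair (R : comPzRingType) (U V : lmodType R) (f g : {linear U -> V}) : U -> (V * V)%type :=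
  fun x => (f x, g x).

Lemma pfst_lin (R : comPzRingType) (V : lmodType R) : linear (@pfst R V).
Proof. by move=> a [x1 x2] [y1 y2]. Qed.
Lemma psnd_lin (R : comPzRingType) (V : lmodType R) : linear (@psnd R V).
Proof. by move=> a [x1 x2] [y1 y2]. Qed.
Lemma pidf_lin (R : comPzRingType) (V : lmodType R) : linear (@pidf R V).
Proof. by []. Qed.
Lemma ppair_lin (R : comPzRingType) (U V : lmodType R) (f g : {linear U -> V}) :
  linear (ppair f g).
Proof. by move=> a x y; rewrite /ppair !linearP. Qed.

HB.instance Definition _ (R : comPzRingType) (V : lmodType R) := GRing.isLinear.Build R _ _ _ (@pfst R V) (@pfst_lin R V).
HB.instance Definition _ (R : comPzRingType) (V : lmodType R) := GRing.isLinear.Build R _ _ _ (@psnd R V) (@psnd_lin R V).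
HB.instance Definition _ (R : comPzRingType) (V : lmodType R) := GRing.isLinear.Build R _ _ _ (@pidf R V) (@pidf_lin R V).
HB.instance Definition _ (R : comPzRingType) (U V : lmodType R) (f g : {linear U -> V}) := GRing.isLinear.Build R _ _ _ (@ppair R U V f g) (@ppair_lin R U V f g).

Theorem lemma3p8 (R : comPzRingType) (T : kron_rep R) :
  in_perp_Rel T <-> (forall y : Mh T, y = 0).
Proof.
split.
- move=> H y.
  pose F := @KronRep R (Mh T * Mh T)%type (Mh T) (@pfst R (Mh T)) (@psnd R (Mh T)).
  have RF : in_Rel F.
    by move=> [x1 x2] /= h1 h2; rewrite /pfst /psnd /= in h1 h2; rewrite h1 h2.
  have := H F RF (ppair (mu_a T) (mu_b T)) (@pidf R (Mh T)).
  case; first by split.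
  by move=> _ /(_ y).
- move=> H0 F RF ft fh [Ha Hb].
  have fh0 : forall y, fh y = 0 by move=> y; rewrite (H0 y) linear0.
  split=> // x; apply: RF.
  + by rewrite -Ha fh0.
  + by rewrite -Hb fh0.
Qed.
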